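(* For $i\in\{1,2\}$ let $\Sigma_{i,\mathbb{T}}$ be the linear time-varying system $x_i(t+1)=A_i(t)x_i(t)+B_i(t)u_i(t)$, $y_i(t)=C_i(t)x_i(t)+D_i(t)u_i(t)$, $t\in\mathbb{T}=\{0,\dots,T-1\}$, with $u_i(t)\in\mathbb{R}^{n_u}$, $y_i(t)\in\mathbb{R}^{n_y}$ and initial state $x_i(0)=x_{i0}$, with admissible behavior $\mathcal{B}_{i,x_{i0}}$. Suppose: (C1) for each $i$, test inputs $\mathbf{u}_i^0,\dots,\mathbf{u}_i^{n_uT}\in\mathbb{R}^{n_uT}$ are applied from $x_{i0}$ with outputs $\mathbf{y}_i^k$, where $\mathbf{u}_i^0=0$ and $\operatorname{rank}[\mathbf{u}_i^1,\dots,\mathbf{u}_i^{n_uT}]=n_uT$; with $w_i^k=\operatorname{col}(\mathbf{u}_i^k,\mathbf{y}_i^k)$ and $W_i=[w_i^1-w_i^0,\dots,w_i^{n_uT}-w_i^0]$; (C2) $H_i\in\mathbb{R}^{n_wT\times n_uT}$ is a matrix whose columns form an orthonormal basis of $\operatorname{span}(W_i)$; (C3) there exist $l_1,l_2\in\mathbb{R}^{n_uT}$ with $H_1l_1+H_2l_2=w_2^0-w_1^0$; (C4) $H_1^{\rm T}H_2=UDV^{\rm T}$ is a singular value decomposition with $U,V$ orthogonal and $D=\operatorname{diag}(s_1,\dots,s_{n_uT})$, $s_1\ge\dots\ge s_{n_uT}>0$. Let $w_g\in\mathcal{B}_{2,x_{20}}$, let $\overline{g}\in\mathbb{R}^{n_uT}$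 satisfy $w_g=H_2V\overline{g}+w_2^0$, and define $w_h=H_1UD\overline{g}+P_{\operatorname{span}(H_1)}(w_2^0-w_1^0)+w_1^0$. Then $w_h\in\mathcal{B}_{1,x_{10}}$ and $\|w_h-w_g\|=\min_{w\in\mathcal{B}_{1,x_{10}}}\|w-w_g\|$.
   Context: $n_w=n_u+n_y$. Supervectors over $\mathbb{T}$: $\mathbf{u}_i=[u_i(0)^{\rm T},\dots,u_i(T-1)^{\rm T}]^{\rm T}$, likewise $\mathbf{y}_i,\mathbf{x}_i$. The admissible behavior $\mathcal{B}_{i,x_{i0}}\subseteq\mathbb{R}^{n_wT}$ is the set of all $\operatorname{col}(\mathbf{u}_i,\mathbf{y}_i)$ for which there exists a state supervector $\mathbf{x}_i$ with $x_i(0)=x_{i0}$ such that $(\mathbf{u}_i,\mathbf{y}_i,\mathbf{x}_i)$ satisfies the system equations; $\mathbf{y}_i^k$ is the output supervector under input $\mathbf{u}_i^k$ from $x_{i0}$. $P_{\operatorname{span}(H_1)}$ denotes the orthogonal projection of $\mathbb{R}^{n_wT}$ onto $\operatorname{span}(H_1)$ (with respect to the standard inner product), and $\|\cdot\|$ is the Euclidean norm. *)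

(* Defs.v *)
From HB Require Import structures.
From mathcomp Require Import all_boot all_order all_algebra.
From mathcomp Require Import reals.
From Stdlib Require Import ClassicalEpsilon.
Set Implicit Arguments. Unset Strict Implicit. Unset Printing Implicit Defensive.
Import Order.TTheory GRing.Theory Num.Theory.
Local Open Scope ring_scope.

(* Supervector [v(0); ...; v(T-1)] of a signal v : nat -> 'cV_n, in 'cV_(T*n).
   mxvec is row-major, so entry (t,j) sits at index t*n + j. *)
Definition supervec (R : realType) (T n : nat) (v : nat -> 'cV[R]_n) : 'cV[R]_(T * n) :=
  (mxvec (\matrix_(t < T, j < n) v t j 0))^T.

Definition behavior (R : realType) (T nu ny nx : nat)
  (A : nat -> 'M[R]_nx) (B : nat -> 'M[R]_(nx, nu))
  (C : nat -> 'M[R]_(ny, nx)) (D : nat -> 'M[R]_(ny, nu))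
  (x0 : 'cV[R]_nx) (w : 'cV[R]_(T * nu + T * ny)) : Prop :=
  exists (u : nat -> 'cV[R]_nu) (y : nat -> 'cV[R]_ny) (x : nat -> 'cV[R]_nx),
    w = col_mx (supervec T u) (supervec T y) /\ x 0%N = x0 /\
    forall t : nat, (t < T)%N ->
      x t.+1 = A t *m x t + B t *m u t /\ y t = C t *m x t + D t *m u t.

Definition enorm (R : realType) (n : nat) (v : 'cV[R]_n) : R :=
  Num.sqrt (\sum_(i < n) v i 0 ^+ 2).

Definition proj_span (R : realType) (n m : nat) (M : 'M[R]_(n, m)) (v : 'cV[R]_n)
  : 'cV[R]_n :=
  epsilon (inhabits 0)
    (fun p : 'cV[R]_n => (exists a : 'cV[R]_m, p = M *m a) /\ M^T *m (v - p) = 0).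

Definition colmat (R : realType) (n N : nat) (f : nat -> 'cV[R]_n) : 'M[R]_(n, N) :=
  \matrix_(r < n, k < N) f k r 0.

(* Main.v *)
Require Import Defs.
From HB Require Import structures.
From mathcomp Require Import all_boot all_order all_algebra.
From mathcomp Require Import reals.
From Stdlib Require Import ClassicalEpsilon.
Import Order.TTheory GRing.Theory Num.Theory.
Local Open Scope ring_scope.

Section Aux.
Variable R : realType.

Lemma supervec_lin (T n : nat) (a : R) (u u' : nat -> 'cV[R]_n) :
  supervec T (fun t => a *: u t + u' t) = a *: supervec T u + supervec T u'.
Proof.
rewrite /supervec.
have -> : \matrix_(t < T, j < n) (a *: u t + u' t) j 0 =
  a *: (\matrix_(t < T, j < n) u t j 0) + \matrix_(t < T, j < n) u' t j 0.
  by apply/matrixP => i j; rewrite !mxE.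
by rewrite linearP /= linearP.
Qed.

Lemma supervec0 (T n : nat) (u : nat -> 'cV[R]_n) :
  (forall t, (t < T)%N -> u t = 0) -> supervec T u = 0.
Proof.
move=> H; rewrite /supervec.
have -> : \matrix_(t < T, j < n) u t j 0 = 0.
  by apply/matrixP => i j; rewrite !mxE H // mxE.
by rewrite linear0 trmx0.
Qed.

Lemma supervec_inv (T n : nat) (u : nat -> 'cV[R]_n) :
  supervec T u = 0 -> forall t, (t < T)%N -> u t = 0.
Proof.
rewrite /supervec => H t Ht.
have H1 : mxvec (\matrix_(t < T, j < n) u t j 0) = 0.
  by rewrite -[mxvec _]trmxK H trmx0.
have H2 : \matrix_(t < T, j < n) u t j 0 = 0.
  by rewrite -[LHS]mxvecK H1 linear0.
apply/matrixP => j k; rewrite ord1.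
have := congr1 (fun M : 'M[R]_(T, n) => M (Ordinal Ht) j) H2.
by rewrite /= !mxE.
Qed.

Arguments supervec_inv {T n u}.
Arguments supervec0 {T n u}.
Variables (T nu ny nx : nat)
  (A : nat -> 'M[R]_nx) (B : nat -> 'M[R]_(nx, nu))
  (C : nat -> 'M[R]_(ny, nx)) (D : nat -> 'M[R]_(ny, nu)).

Lemma beh_comb (a : R) x0 x0' (w w' : 'cV[R]_(T * nu + T * ny)) :
  behavior A B C D x0 w -> behavior A B C D x0' w' ->
  behavior A B C D (a *: x0 + x0') (a *: w + w').
Proof.
move=> [u [y [x [-> [Hx0 Ht]]]]] [u' [y' [x' [-> [Hx0' Ht']]]]].
exists (fun t => a *: u t + u' t), (fun t => a *: y t + y' t),
  (fun t => a *: x t + x' t).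
split; first by rewrite !supervec_lin scale_col_mx add_col_mx.
split; first by rewrite Hx0 Hx0'.
move=> t Ht0; have [E1 E2] := Ht t Ht0; have [E1' E2'] := Ht' t Ht0.
rewrite E1 E1' E2 E2' !mulmxDr -!scalemxAr; split.
- by rewrite scalerDr -!addrA; congr (_ + _); rewrite addrCA.
- by rewrite scalerDr -!addrA; congr (_ + _); rewrite addrCA.
Qed.

Lemma beh_sub x0 (w w' : 'cV[R]_(T * nu + T * ny)) :
  behavior A B C D x0 w -> behavior A B C D x0 w' ->
  behavior A B C D 0 (w - w').
Proof.
move=> H H'; have := @beh_comb (-1) _ _ _ _ H' H.
by rewrite !scaleN1r addNr addrC.
Qed.

Lemma beh_add x0 (w w' : 'cV[R]_(T * nu + T * ny)) :
  behavior A B C D 0 w -> behavior A B C D x0 w' ->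
  behavior A B C D x0 (w + w').
Proof.
move=> H H'; have := @beh_comb 1 _ _ _ _ H H'.
by rewrite !scale1r add0r.
Qed.

Lemma beh0 : behavior A B C D 0 (0 : 'cV[R]_(T * nu + T * ny)).
Proof.
exists (fun _ => 0), (fun _ => 0), (fun _ => 0).
split; first by rewrite !supervec0 // col_mx0.
split; first by [].
by move=> t _; rewrite !mulmx0 !addr0.
Qed.

Lemma beh_zero (w : 'cV[R]_(T * nu + T * ny)) :
  behavior A B C D 0 w -> usubmx w = 0 -> w = 0.
Proof.
move=> [u [y [x [-> [Hx0 Ht]]]]]; rewrite col_mxKu => Hu.
have Hu' := supervec_inv Hu.
have Hx : forall t, (t <= T)%N -> x t = 0.
  elim=> [|t IH] Hle; first by [].
  have [E1 _] := Ht t Hle.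
  by rewrite E1 IH ?(ltnW Hle) // Hu' // !mulmx0 addr0.
rewrite Hu supervec0 ?col_mx0 // => t Hlt.
have [_ E2] := Ht t Hlt.
by rewrite E2 Hx ?(ltnW Hlt) // Hu' // !mulmx0 addr0.
Qed.

Lemma colmat_mul (n N : nat) (f : nat -> 'cV[R]_n) (c : 'cV[R]_N) :
  colmat N f *m c = \sum_(k < N) c k 0 *: f k.
Proof.
apply/matrixP => i j; rewrite ord1 !mxE summxE; apply: eq_bigr => k _.
by rewrite !mxE mulrC.
Qed.

Lemma beh_colmat N (f : nat -> 'cV[R]_(T * nu + T * ny)) (c : 'cV[R]_N) :
  (forall k, (k < N)%N -> behavior A B C D 0 (f k)) ->
  behavior A B C D 0 (colmat N f *m c).
Proof.
move=> Hf; rewrite colmat_mul.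
apply: (big_ind (behavior A B C D 0)); first exact: beh0.
  by move=> a b Ha Hb; apply: beh_add.
move=> k _; have := @beh_comb (c k 0) _ _ _ _ (Hf k (ltn_ord k)) beh0.
by rewrite scaler0 !addr0.
Qed.

End Aux.
Arguments beh_sub {R T nu ny nx A B C D x0 w w'}.
Arguments beh_add {R T nu ny nx A B C D x0 w w'}.
Arguments beh_zero {R T nu ny nx A B C D w}.

Lemma enorm_pyth (R : realType) (n m : nat) (H : 'M[R]_(n, m)) (b : 'cV[R]_m)
  (r : 'cV[R]_n) : H^T *m r = 0 -> enorm r <= enorm (H *m b + r).
Proof.
move=> Hr; rewrite /enorm; apply: ler_wsqrtr.
set p := H *m b.
have Hpr : \sum_(i < n) p i 0 * r i 0 = 0.
  transitivity ((p^T *m r) 0 0).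
    by rewrite mxE; apply: eq_bigr => i _; rewrite !mxE.
  by rewrite /p trmx_mul -mulmxA Hr mulmx0 mxE.
have -> : \sum_(i < n) (p + r) i 0 ^+ 2 =
   \sum_(i < n) p i 0 ^+ 2 + 2 * \sum_(i < n) p i 0 * r i 0 +
   \sum_(i < n) r i 0 ^+ 2.
  rewrite mulr_sumr -!big_split /=; apply: eq_bigr => i _.
  by rewrite [(p + r) i 0]mxE sqrrD -mulr_natl mulrA.
rewrite Hpr mulr0 addr0 lerDr; apply: sumr_ge0 => i _; exact: sqr_ge0.
Qed.

Lemma proj_spanE (R : realType) (n m : nat) (H : 'M[R]_(n, m)) (v : 'cV[R]_n) :
  H^T *m H = 1%:M -> proj_span H v = H *m (H^T *m v).
Proof.
move=> HH; rewrite /proj_span.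
set P := fun p : 'cV[R]_n => _.
have : P (epsilon (inhabits 0) P).
  apply: epsilon_spec; exists (H *m (H^T *m v)); split; first by eexists.
  by rewrite mulmxBr !mulmxA HH mul1mx subrr.
move=> [[a ->] Ha]; move: Ha; rewrite mulmxBr [H^T *m (H *m a)]mulmxA HH mul1mx.
by move/eqP; rewrite subr_eq0 => /eqP ->.
Qed.
Theorem theorem2 (R : realType) (T nu ny nx1 nx2 : nat)
  (A1 : nat -> 'M[R]_nx1) (B1 : nat -> 'M[R]_(nx1, nu))
  (C1 : nat -> 'M[R]_(ny, nx1)) (D1 : nat -> 'M[R]_(ny, nu)) (x10 : 'cV[R]_nx1)
  (A2 : nat -> 'M[R]_nx2) (B2 : nat -> 'M[R]_(nx2, nu))
  (C2 : nat -> 'M[R]_(ny, nx2)) (D2 : nat -> 'M[R]_(ny, nu)) (x20 : 'cV[R]_nx2)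
  (* (C1): test experiments *)
  (u1 : nat -> 'cV[R]_(T * nu)) (y1 : nat -> 'cV[R]_(T * ny))
  (u2 : nat -> 'cV[R]_(T * nu)) (y2 : nat -> 'cV[R]_(T * ny))
  (Hu10 : u1 0%N = 0) (Hu20 : u2 0%N = 0)
  (Hrk1 : \rank (colmat (T * nu) (fun k => u1 k.+1)) = (T * nu)%N)
  (Hrk2 : \rank (colmat (T * nu) (fun k => u2 k.+1)) = (T * nu)%N)
  (Hy1 : forall k, (k <= T * nu)%N ->
     behavior A1 B1 C1 D1 x10 (col_mx (u1 k) (y1 k)))
  (Hy2 : forall k, (k <= T * nu)%N ->
     behavior A2 B2 C2 D2 x20 (col_mx (u2 k) (y2 k)))
  (* (C2) *)
  (H1 H2 : 'M[R]_(T * nu + T * ny, T * nu))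
  (HH1 : H1^T *m H1 = 1%:M) (HH2 : H2^T *m H2 = 1%:M)
  (Hspan1 : (H1^T == (colmat (T * nu)
       (fun k => col_mx (u1 k.+1) (y1 k.+1) - col_mx (u1 0%N) (y1 0%N)))^T)%MS)
  (Hspan2 : (H2^T == (colmat (T * nu)
       (fun k => col_mx (u2 k.+1) (y2 k.+1) - col_mx (u2 0%N) (y2 0%N)))^T)%MS)
  (* (C3) *)
  (HC3 : exists l1 l2 : 'cV[R]_(T * nu),
     H1 *m l1 + H2 *m l2 = col_mx (u2 0%N) (y2 0%N) - col_mx (u1 0%N) (y1 0%N))
  (* (C4) *)
  (U V : 'M[R]_(T * nu)) (s : 'rV[R]_(T * nu))
  (HU : U^T *m U = 1%:M) (HV : V^T *m V = 1%:M)
  (Hsvd : H1^T *m H2 = U *m diag_mx s *m V^T)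
  (Hsdec : forall i j : 'I_(T * nu), (i <= j)%N -> s 0 j <= s 0 i)
  (Hspos : forall i : 'I_(T * nu), 0 < s 0 i)
  (wg : 'cV[R]_(T * nu + T * ny))
  (Hwg : behavior A2 B2 C2 D2 x20 wg)
  (gbar : 'cV[R]_(T * nu))
  (Hgbar : wg = H2 *m V *m gbar + col_mx (u2 0%N) (y2 0%N)) :
  let w10 := col_mx (u1 0%N) (y1 0%N) in
  let w20 := col_mx (u2 0%N) (y2 0%N) in
  let wh := H1 *m U *m diag_mx s *m gbar + proj_span H1 (w20 - w10) + w10 in
  behavior A1 B1 C1 D1 x10 wh /\
  (forall w, behavior A1 B1 C1 D1 x10 w -> enorm (wh - wg) <= enorm (w - wg)).
Proof.
move=> w10 w20 wh.
set N := (T * nu)%N.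
set W1 := colmat N (fun k => col_mx (u1 k.+1) (y1 k.+1) - col_mx (u1 0%N) (y1 0%N)).
have Hb10 : behavior A1 B1 C1 D1 x10 w10 := Hy1 0%N (leq0n _).
have HW1 : forall c, behavior A1 B1 C1 D1 0 (W1 *m c).
  move=> c; apply: beh_colmat => k Hk.
  exact: beh_sub (Hy1 k.+1 Hk) Hb10.
move/andP: Hspan1 => [/submxP [X HX] /submxP [Y HY]].
have EH1 : H1 = W1 *m X^T by rewrite -[H1]trmxK HX trmx_mul trmxK.
have EW1 : W1 = H1 *m Y^T by rewrite -[W1]trmxK HY trmx_mul trmxK.
have HspanB : forall b, behavior A1 B1 C1 D1 0 (H1 *m b).
  by move=> b; rewrite EH1 -mulmxA.
set Mu := colmat N (fun k => u1 k.+1).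
have Mu_unit : Mu \in unitmx by rewrite -row_free_unit /row_free Hrk1.
have EMu : usubmx W1 = Mu.
  apply/matrixP => i k; rewrite !mxE !(unsplitK (inl _)) Hu10 mxE subr0.
  by [].
have Hin : forall w, behavior A1 B1 C1 D1 x10 w -> exists a, w = H1 *m a + w10.
  move=> w Hw.
  have Hd := beh_sub Hw Hb10.
  set d := w - w10 in Hd.
  set c := invmx Mu *m usubmx d.
  have He := beh_sub Hd (HW1 c).
  have He0 := beh_zero He.
  have E : d - W1 *m c = 0.
    apply: He0; rewrite linearB /= -mul_usub_mx EMu /c mulmxA mulmxV //.
    by rewrite mul1mx subrr.
  exists (Y^T *m c).
  by rewrite mulmxA -EW1; move/eqP: E; rewrite subr_eq0 => /eqP <-; rewrite /d subrK.
set v := w20 - w10.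
set b := U *m diag_mx s *m gbar + H1^T *m v.
have Ewh : wh = H1 *m b + w10.
  by rewrite /wh proj_spanE // /b mulmxDr !mulmxA.
split.
  by rewrite Ewh; apply: beh_add.
move=> w /Hin [a ->].
set r := wh - wg.
have E1 : forall x : 'cV[R]_(T * nu), H1^T *m (H1 *m x) = x by move=> x; rewrite mulmxA HH1 mul1mx.
have E2 : H1^T *m (H2 *m V *m gbar) = U *m diag_mx s *m gbar.
  by rewrite !mulmxA Hsvd -(mulmxA _ V^T V) HV mulmx1.
have Hr : H1^T *m r = 0.
  rewrite /r Ewh Hgbar -/w20 mulmxDr mulmxN !mulmxDr E1 E2 /b /v !E1 mulmxN.
  by rewrite addrA subrK subrr.
have -> : H1 *m a + w10 - wg = H1 *m (a - b) + r.
  by rewrite /r Ewh mulmxBr -!addrA addKr.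
exact: enorm_pyth.
Qed.
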